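(* Let $d_1,d_2\ge1$ be integers, not both equal to $1$, and $s_1,s_2$ real numbers, and define $$h_a(x_1,x_2)=\int_{-1}^1(1+x_1z)^{d_1}(1+x_2z)^{d_2}\big(x_a(x_as_a-1)(1-z^2)+z(1-x_a^2)\big)\,dz,\qquad a=1,2.$$ If $s_1<1$ and $s_2<1$, then there exist $x_1,x_2\in(0,1)$ with $h_1(x_1,x_2)=0=h_2(x_1,x_2)$. *)

(* Defs.v *)
From Stdlib Require Import Reals.
From Coquelicot Require Import Coquelicot.
Open Scope R_scope.

Definition h_integrand (d1 d2 : nat) (x1 x2 xa sa : R) (z : R) : R :=
  (1 + x1 * z) ^ d1 * (1 + x2 * z) ^ d2 *
  (xa * (xa * sa - 1) * (1 - z ^ 2) + z * (1 - xa ^ 2)).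

Definition h1 (d1 d2 : nat) (s1 : R) (x1 x2 : R) : R :=
  RInt (h_integrand d1 d2 x1 x2 x1 s1) (-1) 1.

Definition h2 (d1 d2 : nat) (s2 : R) (x1 x2 : R) : R :=
  RInt (h_integrand d1 d2 x1 x2 x2 s2) (-1) 1.

(* Main.v *)
Require Import Defs.
From Stdlib Require Import Reals Lra Lia Psatz.
From Coquelicot Require Import Coquelicot.
Open Scope R_scope.

Definition Xf (s t : R) := 2*t/(1+sqrt(1+4*t*(t-s))).
Definition gint (d1 d2 : nat) (a b c z : R) :=
  (1+a*z)^d1*(1+b*z)^d2 * (z - c*(1-z^2)).
Definition phi d1 d2 s1 s2 t := RInt (gint d1 d2 (Xf s1 t) (Xf s2 t) t) (-1) 1.

Lemma Xf_props s t : s < 1 -> 0 < t ->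
  0 < Xf s t < 1 /\ (t - s) * (Xf s t)^2 + Xf s t - t = 0 /\ Xf s t <= 2*t.
Proof.
  intros Hs Ht. unfold Xf.
  set (DD := 1+4*t*(t-s)).
  assert (Hts : 0 < t*(1-s)) by (apply Rmult_lt_0_compat; lra).
  pose proof (pow2_ge_0 (2*t-1)).
  assert (HDD : 0 <= DD) by (unfold DD; nra).
  set (q := sqrt DD).
  assert (Hq0 : 0 <= q) by apply sqrt_pos.
  assert (Hq2 : q*q = DD) by (apply sqrt_sqrt; exact HDD).
  assert (Hpos : 0 < 1 + q) by lra.
  set (x := 2*t/(1+q)).
  assert (Hx : x * (1+q) = 2*t) by (unfold x; field; lra).
  assert (Hx0 : 0 < x) by (unfold x; apply Rdiv_lt_0_compat; lra).
  assert (HDp : 0 < DD) by (unfold DD; nra).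
  assert (Hqp : 0 < q) by (destruct Hq0 as [h|h]; [exact h| rewrite <- h in Hq2; lra]).
  split; [split|split].
  - exact Hx0.
  - destruct (Rle_lt_dec (2*t) 1).
    + nra.
    + assert (2*t - 1 < q) by (unfold DD in Hq2; nra). nra.
  - unfold DD in Hq2. nra.
  - nra.
Qed.

Lemma gint_eq d1 d2 x1 x2 xa sa t z :
  (t - sa) * xa^2 + xa - t = 0 ->
  h_integrand d1 d2 x1 x2 xa sa z = (1 - xa^2) * gint d1 d2 x1 x2 t z.
Proof.
  intros H. unfold h_integrand, gint.
  assert (xa * (xa * sa - 1) = - t * (1 - xa^2)) by nra.
  rewrite H0. ring.
Qed.

Lemma gint_cont d1 d2 a b c z : continuous (gint d1 d2 a b c) z.
Proof. apply (@ex_derive_continuous R_AbsRing R_NormedModule). unfold gint. auto_derive. auto. Qed.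

Lemma gint_ex d1 d2 a b c u v : ex_RInt (gint d1 d2 a b c) u v.
Proof. apply (@ex_RInt_continuous R_CompleteNormedModule). intros; apply gint_cont. Qed.

Lemma h_from_phi d1 d2 s1 s2 t : s1 < 1 -> s2 < 1 -> 0 < t ->
  phi d1 d2 s1 s2 t = 0 ->
  h1 d1 d2 s1 (Xf s1 t) (Xf s2 t) = 0 /\ h2 d1 d2 s2 (Xf s1 t) (Xf s2 t) = 0.
Proof.
  intros H1 H2 Ht Hp.
  destruct (Xf_props s1 t H1 Ht) as [_ [E1 _]].
  destruct (Xf_props s2 t H2 Ht) as [_ [E2 _]].
  unfold h1, h2; split.
  - rewrite (RInt_ext _ (fun z => scal (1 - (Xf s1 t)^2) (gint d1 d2 (Xf s1 t) (Xf s2 t) t z))).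
    + rewrite (@RInt_scal R_CompleteNormedModule) by apply gint_ex. unfold phi in Hp. rewrite Hp.
      unfold scal; simpl; unfold mult; simpl; ring.
    + intros z _. unfold scal; simpl; unfold mult; simpl. apply gint_eq; auto.
  - rewrite (RInt_ext _ (fun z => scal (1 - (Xf s2 t)^2) (gint d1 d2 (Xf s1 t) (Xf s2 t) t z))).
    + rewrite (@RInt_scal R_CompleteNormedModule) by apply gint_ex. unfold phi in Hp. rewrite Hp.
      unfold scal; simpl; unfold mult; simpl; ring.
    + intros z _. unfold scal; simpl; unfold mult; simpl. apply gint_eq; auto.
Qed.

Lemma poly_RInt a b c u v :
  RInt (fun z => a + b*z + c*z^2) u v =
  a*(v-u) + b*(v^2-u^2)/2 + c*(v^3-u^3)/3.
Proof.
  apply is_RInt_unique.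
  assert (H := @is_RInt_derive R_CompleteNormedModule
     (fun z => a*z + b*z^2/2 + c*z^3/3) (fun z => a + b*z + c*z^2) u v).
  replace (a*(v-u) + b*(v^2-u^2)/2 + c*(v^3-u^3)/3) with
    (minus ((fun z => a*z + b*z^2/2 + c*z^3/3) v) ((fun z => a*z + b*z^2/2 + c*z^3/3) u)).
  apply H.
  - intros x _. auto_derive. auto. field.
  - intros x _. apply (@ex_derive_continuous R_AbsRing R_NormedModule). auto_derive. auto.
  - unfold minus, plus, opp; simpl. field.
Qed.

Lemma ex_RInt_R (f : R -> R) u v : (forall z, continuous f z) -> ex_RInt f u v.
Proof. intros H. apply (@ex_RInt_continuous R_CompleteNormedModule). intros; apply H. Qed.

Lemma phi_bound_neg d1 d2 x1 x2 t : 0 < x1 < 1 -> 0 < x2 < 1 ->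
  2^d1*2^d2 <= t ->
  RInt (gint d1 d2 x1 x2 t) (-1) 1 < 0.
Proof.
  intros Hx1 Hx2 Ht.
  set (Pm := 2^d1*2^d2).
  assert (HPm : 1 <= Pm).
  { unfold Pm. assert (1 <= 2^d1) by (apply pow_R1_Rle; lra).
    assert (1 <= 2^d2) by (apply pow_R1_Rle; lra). nra. }
  assert (Htp : Pm <= t) by exact Ht.
  assert (Ht0 : 0 < t) by lra.
  rewrite <- (RInt_Chasles (V:=R_CompleteNormedModule) _ (-1) 0 1) by apply gint_ex.
  unfold plus; simpl.
  assert (A1 : RInt (gint d1 d2 x1 x2 t) (-1) 0 <= 0).
  { assert (Z0 : RInt (fun _ => 0) (-1) 0 = 0).
    { rewrite RInt_const. unfold scal; simpl; unfold mult; simpl. ring. }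
    rewrite <- Z0 at 2.
    apply RInt_le; [lra| apply gint_ex | apply ex_RInt_R; intros; apply continuous_const |].
    intros z Hz. unfold gint.
    assert (0 <= (1+x1*z)^d1) by (apply pow_le; nra).
    assert (0 <= (1+x2*z)^d2) by (apply pow_le; nra).
    assert (0 <= 1 - z^2) by nra.
    assert (0 <= t*(1-z^2)) by (apply Rmult_le_pos; lra).
    assert (Hw : z - t*(1-z^2) <= 0) by lra.
    assert (HP : 0 <= (1+x1*z)^d1*(1+x2*z)^d2) by (apply Rmult_le_pos; lra).
    pose proof (Rmult_le_compat_l _ _ _ HP Hw). lra. }
  assert (A2 : RInt (gint d1 d2 x1 x2 t) 0 1 <= RInt (fun z => (- t) + Pm*z + t*z^2) 0 1).
  { apply RInt_le; [lra| apply gint_ex | apply ex_RInt_R; intros;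
      apply (@ex_derive_continuous R_AbsRing R_NormedModule); auto_derive; auto |].
    intros z Hz. unfold gint.
    assert (1 <= (1+x1*z)^d1) by (apply pow_R1_Rle; nra).
    assert (1 <= (1+x2*z)^d2) by (apply pow_R1_Rle; nra).
    assert ((1+x1*z)^d1 <= 2^d1) by (apply pow_incr; nra).
    assert ((1+x2*z)^d2 <= 2^d2) by (apply pow_incr; nra).
    set (P := (1+x1*z)^d1*(1+x2*z)^d2).
    assert (1 <= P) by (unfold P; nra).
    assert (P <= Pm) by (unfold P, Pm; apply Rmult_le_compat; lra).
    assert (P*z <= Pm*z) by nra.
    assert (H1z : 0 <= 1 - z^2) by nra.
    assert (Hq : 0 <= (P-1)*(1-z^2)) by (apply Rmult_le_pos; lra).
    assert (Hq2 : 0 <= t*((P-1)*(1-z^2))) by (apply Rmult_le_pos; lra).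
    replace (P * (z - t * (1 - z ^ 2))) with (P*z - t*(1-z^2) - t*((P-1)*(1-z^2))) by ring.
    lra. }
  rewrite poly_RInt in A2. lra.
Qed.
Lemma INR_le_pow2 n : INR n <= 2^n.
Proof.
  induction n. simpl; lra.
  rewrite S_INR. simpl. assert (1 <= 2^n) by (apply pow_R1_Rle; lra). lra.
Qed.

Lemma pow_taylor n u : Rabs u <= 1 ->
  Rabs ((1+u)^n - 1 - INR n * u) <= INR n * 2^n * u^2.
Proof.
  intros Hu. induction n.
  - simpl. replace (1-1-0*u) with 0 by ring. rewrite Rabs_R0. lra.
  - replace ((1+u)^(S n) - 1 - INR (S n) * u) with
      ((1+u)*((1+u)^n - 1 - INR n * u) + INR n * u^2) by (rewrite S_INR; simpl; ring).
    eapply Rle_trans. apply Rabs_triang.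
    rewrite Rabs_mult.
    assert (H1 : Rabs (1+u) <= 2) by (eapply Rle_trans; [apply Rabs_triang|]; rewrite Rabs_R1; lra).
    assert (H2 : 0 <= u^2) by nra.
    assert (Hn : 0 <= INR n) by apply pos_INR.
    rewrite (Rabs_right (INR n * u^2)) by nra.
    pose proof (Rabs_pos (1+u)). pose proof (Rabs_pos ((1+u)^n - 1 - INR n * u)).
    assert (Rabs (1+u) * Rabs ((1+u)^n - 1 - INR n * u) <= 2 * (INR n * 2^n * u^2))
      by (apply Rmult_le_compat; lra).
    pose proof (INR_le_pow2 n).
    assert (INR n * u^2 <= 2^n * u^2) by nra.
    rewrite S_INR. simpl. nra.
Qed.

Lemma pow_abs_le u n B : Rabs u <= B -> Rabs (u^n) <= B^n.
Proof. intros H. rewrite <- RPow_abs. apply pow_incr. split; [apply Rabs_pos| exact H]. Qed.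

Lemma P_approx (d1 d2 : nat) a b z X : Rabs a <= X -> Rabs b <= X -> X <= 1 -> Rabs z <= 1 ->
  Rabs ((1+a*z)^d1*(1+b*z)^d2 - 1 - (INR d1 * a + INR d2 * b) * z)
   <= (INR d1 * 2^d1 * 2^d2 + (1 + INR d1) * INR d2 * 2^d2 + INR d1 * INR d2) * X^2.
Proof.
  intros Ha Hb HX Hz.
  assert (HX0 : 0 <= X) by (pose proof (Rabs_pos a); lra).
  assert (Haz : Rabs (a*z) <= X) by (rewrite Rabs_mult; pose proof (Rabs_pos a); pose proof (Rabs_pos z); nra).
  assert (Hbz : Rabs (b*z) <= X) by (rewrite Rabs_mult; pose proof (Rabs_pos b); pose proof (Rabs_pos z); nra).
  set (u := a*z) in *. set (v := b*z) in *.
  assert (Hu2 : u^2 <= X^2) by (rewrite <- (pow2_abs u); apply pow_incr; split; [apply Rabs_pos|lra]).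
  assert (Hv2 : v^2 <= X^2) by (rewrite <- (pow2_abs v); apply pow_incr; split; [apply Rabs_pos|lra]).
  pose proof (pow_taylor d1 u ltac:(lra)) as T1.
  pose proof (pow_taylor d2 v ltac:(lra)) as T2.
  assert (HB : Rabs ((1+v)^d2) <= 2^d2).
  { apply pow_abs_le. eapply Rle_trans; [apply Rabs_triang|]; rewrite Rabs_R1; lra. }
  assert (HA : Rabs (1 + INR d1 * u) <= 1 + INR d1).
  { eapply Rle_trans; [apply Rabs_triang|]; rewrite Rabs_R1, Rabs_mult, Rabs_right by (apply Rle_ge, pos_INR).
    pose proof (pos_INR d1). nra. }
  assert (HC : Rabs (INR d1 * u * (INR d2 * v)) <= INR d1 * INR d2 * X^2).
  { rewrite !Rabs_mult, !(Rabs_right (INR _)) by (apply Rle_ge, pos_INR).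
    pose proof (pos_INR d1). pose proof (pos_INR d2).
    assert (Rabs u * Rabs v <= X^2) by (pose proof (Rabs_pos u); pose proof (Rabs_pos v); nra).
    pose proof (Rabs_pos u); pose proof (Rabs_pos v).
    replace (INR d1 * Rabs u * (INR d2 * Rabs v)) with (INR d1 * INR d2 * (Rabs u * Rabs v)) by ring.
    apply Rmult_le_compat_l; [nra|lra]. }
  replace ((1+u)^d1*(1+v)^d2 - 1 - (INR d1 * a + INR d2 * b) * z) with
    (((1+u)^d1 - 1 - INR d1 * u) * (1+v)^d2 + (1 + INR d1 * u) * ((1+v)^d2 - 1 - INR d2 * v)
      + INR d1 * u * (INR d2 * v)) by (unfold u, v; ring).
  eapply Rle_trans. apply Rabs_triang.
  eapply Rle_trans. apply Rplus_le_compat_r. apply Rabs_triang.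
  pose proof (pos_INR d1). pose proof (pos_INR d2).
  assert (P1 : 0 <= 2^d1) by (apply pow_le; lra).
  assert (P2 : 0 <= 2^d2) by (apply pow_le; lra).
  assert (E1 : Rabs (((1+u)^d1 - 1 - INR d1 * u) * (1+v)^d2) <= INR d1 * 2^d1 * X^2 * 2^d2).
  { rewrite Rabs_mult. apply Rmult_le_compat; try apply Rabs_pos; try lra.
    eapply Rle_trans; [exact T1|]. apply Rmult_le_compat_l; [|lra]. apply Rmult_le_pos; lra. }
  assert (E2 : Rabs ((1 + INR d1 * u) * ((1+v)^d2 - 1 - INR d2 * v)) <= (1 + INR d1) * (INR d2 * 2^d2 * X^2)).
  { rewrite Rabs_mult. apply Rmult_le_compat; try apply Rabs_pos; try lra.
    eapply Rle_trans; [exact T2|]. apply Rmult_le_compat_l; [|lra]. apply Rmult_le_pos; lra. }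
  replace ((INR d1 * 2^d1 * 2^d2 + (1 + INR d1) * INR d2 * 2^d2 + INR d1 * INR d2) * X^2) with
   (INR d1 * 2^d1 * X^2 * 2^d2 + (1 + INR d1) * (INR d2 * 2^d2 * X^2) + INR d1 * INR d2 * X^2) by ring.
  lra.
Qed.

Lemma Xf_lower s t : s < 1 -> 0 < t -> t*(1 - (t^2 + Rabs s * t)) <= Xf s t.
Proof.
  intros Hs Ht. unfold Xf.
  set (DD := 1+4*t*(t-s)).
  assert (Hts : 0 < t*(1-s)) by (apply Rmult_lt_0_compat; lra).
  pose proof (pow2_ge_0 (2*t-1)).
  assert (HDD : 0 <= DD) by (unfold DD; nra).
  set (q := sqrt DD).
  assert (Hq0 : 0 <= q) by apply sqrt_pos.
  assert (Hq2 : q*q = DD) by (apply sqrt_sqrt; exact HDD).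
  set (e := t^2 + Rabs s * t).
  assert (He : 0 <= e) by (unfold e; pose proof (Rabs_pos s); nra).
  assert (HsR : - Rabs s <= s) by (pose proof (Rabs_maj2 s); lra).
  assert (Hts2 : 0 <= t*(Rabs s + s)) by (apply Rmult_le_pos; lra).
  assert (HqD : q*q <= (1+2*e)*(1+2*e)) by (rewrite Hq2; unfold DD; pose proof (pow2_ge_0 e); unfold e in *; nra).
  assert (Hqe : q <= 1 + 2*e) by nra.
  set (x := 2*t/(1+q)).
  assert (Hx : x * (1+q) = 2*t) by (unfold x; field; lra).
  assert (Hx0 : 0 < x) by (unfold x; apply Rdiv_lt_0_compat; lra).
  destruct (Rle_lt_dec e 1).
  - assert (t*(1-e)*(1+q) <= x*(1+q)).
    { rewrite Hx. assert (0 <= t*(1-e)) by nra. nra. }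
    apply Rmult_le_reg_r with (1+q); lra.
  - nra.
Qed.

Lemma phi_bound_pos d1 d2 x1 x2 t X : 0 < x1 <= X -> 0 < x2 <= X -> X <= 1 -> 0 < t ->
  let K := INR d1 * 2^d1 * 2^d2 + (1 + INR d1) * INR d2 * 2^d2 + INR d1 * INR d2 in
  let M := INR d1 + INR d2 + K in
  2*(INR d1 * x1 + INR d2 * x2)/3 - 2*K*X^2 - 4/3*t*(1+M*X)
    <= RInt (gint d1 d2 x1 x2 t) (-1) 1.
Proof.
  intros Hx1 Hx2 HX Ht K M.
  set (c := INR d1 * x1 + INR d2 * x2).
  assert (Hc0 : 0 <= c) by (unfold c; pose proof (pos_INR d1); pose proof (pos_INR d2); nra).
  assert (HcX : c <= (INR d1 + INR d2) * X) by (unfold c; pose proof (pos_INR d1); pose proof (pos_INR d2); nra).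
  assert (HK : 0 <= K).
  { unfold K. pose proof (pos_INR d1); pose proof (pos_INR d2).
    assert (0 <= 2^d1) by (apply pow_le; lra). assert (0 <= 2^d2) by (apply pow_le; lra).
    assert (0 <= INR d1 * 2^d1) by nra. assert (0 <= INR d2 * 2^d2) by nra.
    assert (0 <= INR d1 * 2^d1 * 2^d2) by nra.
    assert (0 <= (1 + INR d1) * INR d2 * 2^d2) by nra. nra. }
  set (a0 := - K*X^2 - t*(1+M*X)). set (c0 := c + t*(1+M*X)).
  replace (2*c/3 - 2*K*X^2 - 4/3*t*(1+M*X)) with (a0*(1 - -1) + 1*(1^2 - (-1)^2)/2 + c0*(1^3 - (-1)^3)/3)
    by (unfold a0, c0; field).
  rewrite <- poly_RInt.
  apply RInt_le; [lra| apply ex_RInt_R; intros;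
      apply (@ex_derive_continuous R_AbsRing R_NormedModule); auto_derive; auto | apply gint_ex |].
  intros z Hz. unfold gint.
  assert (Hza : Rabs z <= 1) by (apply Rabs_le; lra).
  pose proof (P_approx d1 d2 x1 x2 z X ltac:(rewrite Rabs_right; lra) ltac:(rewrite Rabs_right; lra) HX Hza) as HP.
  fold K in HP. fold c in HP.
  set (P := (1+x1*z)^d1*(1+x2*z)^d2) in *.
  set (E := P - 1 - c*z) in *.
  assert (HE : - (K*X^2) <= E <= K*X^2) by (apply Rabs_le_between; exact HP).
  assert (HEz : - (K*X^2) <= E*z).
  { destruct (Rle_dec 0 E).
    - destruct (Rle_dec 0 z); nra.
    - destruct (Rle_dec 0 z); nra. }
  assert (HPz : z + c*z^2 - K*X^2 <= P*z) by (replace P with (1 + c*z + E) by (unfold E; ring); nra).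
  assert (HX2 : X^2 <= X) by nra.
  assert (HKX : K*X^2 <= K*X) by (apply Rmult_le_compat_l; lra).
  assert (Hcz : c*z <= c) by nra.
  assert (HPu : P <= 1 + M*X).
  { replace P with (1 + c*z + E) by (unfold E; ring). unfold M. nra. }
  assert (H1z : 0 <= 1 - z^2) by nra.
  assert (HtP : t*(P*(1-z^2)) <= t*((1+M*X)*(1-z^2))).
  { apply Rmult_le_compat_l; [lra|]. apply Rmult_le_compat_r; lra. }
  unfold a0, c0.
  replace (P * (z - t * (1 - z ^ 2))) with (P*z - t*(P*(1-z^2))) by ring.
  replace (- K * X ^ 2 - t * (1 + M * X) + 1 * z + (c + t * (1 + M * X)) * z ^ 2)
   with (z + c*z^2 - K*X^2 - t*((1+M*X)*(1-z^2))) by ring.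
  lra.
Qed.

Lemma pow_lip n u v B : Rabs u <= B -> Rabs v <= B -> 1 <= B ->
  Rabs (u^n - v^n) <= INR n * B^n * Rabs (u - v).
Proof.
  intros Hu Hv HB. induction n.
  - simpl. replace (1-1) with 0 by ring. rewrite Rabs_R0. pose proof (Rabs_pos (u-v)). lra.
  - replace (u^(S n) - v^(S n)) with (u*(u^n - v^n) + v^n*(u-v)) by (simpl; ring).
    eapply Rle_trans. apply Rabs_triang. rewrite !Rabs_mult.
    pose proof (pow_abs_le v n B Hv).
    pose proof (Rabs_pos u). pose proof (Rabs_pos (u^n - v^n)). pose proof (Rabs_pos (u - v)).
    pose proof (pos_INR n).
    assert (1 <= B^n) by (apply pow_R1_Rle; lra).
    assert (Rabs u * Rabs (u^n - v^n) <= B * (INR n * B^n * Rabs (u-v))) by (apply Rmult_le_compat; lra).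
    assert (Rabs (v^n) * Rabs (u-v) <= B^n * Rabs (u - v)) by (apply Rmult_le_compat_r; lra).
    assert (B^n * Rabs (u-v) <= B^(S n) * Rabs (u-v)).
    { apply Rmult_le_compat_r; [lra|]. simpl. nra. }
    replace ((INR (S n)) * B^(S n) * Rabs (u - v)) with (B * (INR n * B^n * Rabs (u-v)) + B^(S n) * Rabs (u-v))
      by (rewrite S_INR; simpl; ring).
    lra.
Qed.

Lemma prod3_lip p1 p2 p3 q1 q2 q3 M :
  Rabs p2 <= M -> Rabs p3 <= M -> Rabs q1 <= M -> Rabs q2 <= M ->
  Rabs (p1*p2*p3 - q1*q2*q3) <= M^2 * (Rabs (p1-q1) + Rabs (p2-q2) + Rabs (p3-q3)).
Proof.
  intros H2 H3 G1 G2.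
  replace (p1*p2*p3 - q1*q2*q3) with ((p1-q1)*(p2*p3) + (q1*p3)*(p2-q2) + (q1*q2)*(p3-q3)) by ring.
  eapply Rle_trans. apply Rabs_triang.
  eapply Rle_trans. apply Rplus_le_compat_r. apply Rabs_triang.
  rewrite !Rabs_mult.
  pose proof (Rabs_pos p2). pose proof (Rabs_pos p3). pose proof (Rabs_pos q1). pose proof (Rabs_pos q2).
  pose proof (Rabs_pos (p1-q1)). pose proof (Rabs_pos (p2-q2)). pose proof (Rabs_pos (p3-q3)).
  assert (A1 : Rabs p2 * Rabs p3 <= M^2) by (simpl; rewrite Rmult_1_r; apply Rmult_le_compat; lra).
  assert (A2 : Rabs q1 * Rabs p3 <= M^2) by (simpl; rewrite Rmult_1_r; apply Rmult_le_compat; lra).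
  assert (A3 : Rabs q1 * Rabs q2 <= M^2) by (simpl; rewrite Rmult_1_r; apply Rmult_le_compat; lra).
  assert (Rabs (p1-q1) * (Rabs p2 * Rabs p3) <= Rabs (p1-q1) * M^2) by (apply Rmult_le_compat_l; lra).
  assert (Rabs q1 * Rabs p3 * Rabs (p2-q2) <= M^2 * Rabs (p2-q2)) by (apply Rmult_le_compat_r; lra).
  assert (Rabs q1 * Rabs q2 * Rabs (p3-q3) <= M^2 * Rabs (p3-q3)) by (apply Rmult_le_compat_r; lra).
  nra.
Qed.

Lemma gint_lip d1 d2 a b c a0 b0 c0 z B :
  1 <= B -> Rabs a <= B -> Rabs b <= B -> Rabs c <= B ->
  Rabs a0 <= B -> Rabs b0 <= B -> Rabs c0 <= B -> Rabs z <= 1 ->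
  let M := (1+B)^d1 + (1+B)^d2 + (1+B) in
  Rabs (gint d1 d2 a b c z - gint d1 d2 a0 b0 c0 z) <=
   M^2 * (INR d1 * (1+B)^d1 + INR d2 * (1+B)^d2 + 1) * (Rabs (a - a0) + Rabs (b - b0) + Rabs (c - c0)).
Proof.
  intros HB Ha Hb Hc Ha0 Hb0 Hc0 Hz M. unfold gint.
  assert (Hlin : forall x, Rabs x <= B -> Rabs (1 + x*z) <= 1+B).
  { intros x Hx. eapply Rle_trans; [apply Rabs_triang|]. rewrite Rabs_R1, Rabs_mult.
    pose proof (Rabs_pos x). pose proof (Rabs_pos z). nra. }
  assert (P1 : 0 <= (1+B)^d1) by (apply pow_le; lra).
  assert (P2 : 0 <= (1+B)^d2) by (apply pow_le; lra).
  assert (Hpw : forall n x, Rabs x <= B -> Rabs ((1+x*z)^n) <= (1+B)^n)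
    by (intros; apply pow_abs_le; auto).
  assert (Hw : forall x, Rabs x <= B -> Rabs (z - x*(1-z^2)) <= 1+B).
  { intros x Hx. eapply Rle_trans; [apply Rabs_triang|]. rewrite Rabs_Ropp, Rabs_mult.
    assert (Rabs (1 - z^2) <= 1).
    { apply Rabs_le. assert (z^2 <= 1). { rewrite <- (pow2_abs z). pose proof (Rabs_pos z). nra. }
      pose proof (pow2_ge_0 z). lra. }
    pose proof (Rabs_pos x). pose proof (Rabs_pos (1-z^2)). nra. }
  assert (HM1 : forall n x, Rabs x <= B -> (n = d1 \/ n = d2) -> Rabs ((1+x*z)^n) <= M).
  { intros n x Hx [->| ->]; [specialize (Hpw d1 _ Hx)|specialize (Hpw d2 _ Hx)]; unfold M; lra. }
  assert (HM3 : forall x, Rabs x <= B -> Rabs (z - x*(1-z^2)) <= M).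
  { intros x Hx. specialize (Hw _ Hx). unfold M; lra. }
  eapply Rle_trans. apply prod3_lip with (M := M); [apply HM1|apply HM3|apply HM1|apply HM1]; auto.
  assert (L1 : Rabs ((1+a*z)^d1 - (1+a0*z)^d1) <= INR d1 * (1+B)^d1 * Rabs (a - a0)).
  { eapply Rle_trans. apply pow_lip; [apply Hlin; eauto| apply Hlin; eauto| lra].
    apply Rmult_le_compat_l. pose proof (pos_INR d1); nra.
    replace (1 + a*z - (1 + a0*z)) with ((a - a0)*z) by ring. rewrite Rabs_mult.
    pose proof (Rabs_pos (a-a0)). pose proof (Rabs_pos z). nra. }
  assert (L2 : Rabs ((1+b*z)^d2 - (1+b0*z)^d2) <= INR d2 * (1+B)^d2 * Rabs (b - b0)).
  { eapply Rle_trans. apply pow_lip; [apply Hlin; eauto| apply Hlin; eauto| lra].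
    apply Rmult_le_compat_l. pose proof (pos_INR d2); nra.
    replace (1 + b*z - (1 + b0*z)) with ((b - b0)*z) by ring. rewrite Rabs_mult.
    pose proof (Rabs_pos (b-b0)). pose proof (Rabs_pos z). nra. }
  assert (L3 : Rabs ((z - c*(1-z^2)) - (z - c0*(1-z^2))) <= Rabs (c - c0)).
  { replace ((z - c*(1-z^2)) - (z - c0*(1-z^2))) with ((c0 - c)*(1-z^2)) by ring.
    rewrite Rabs_mult, <- Rabs_Ropp, Ropp_minus_distr.
    assert (Rabs (1 - z^2) <= 1).
    { apply Rabs_le. assert (z^2 <= 1). { rewrite <- (pow2_abs z). pose proof (Rabs_pos z). nra. }
      pose proof (pow2_ge_0 z). lra. }
    pose proof (Rabs_pos (c-c0)). pose proof (Rabs_pos (1-z^2)). nra. }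
  pose proof (Rabs_pos (a-a0)). pose proof (Rabs_pos (b-b0)). pose proof (Rabs_pos (c-c0)).
  pose proof (pos_INR d1). pose proof (pos_INR d2).
  assert (HM2 : 0 <= M^2) by apply pow2_ge_0.
  assert (Hs : Rabs ((1+a*z)^d1 - (1+a0*z)^d1) + Rabs ((1+b*z)^d2 - (1+b0*z)^d2) +
     Rabs ((z - c*(1-z^2)) - (z - c0*(1-z^2))) <=
     (INR d1 * (1+B)^d1 + INR d2 * (1+B)^d2 + 1) * (Rabs (a - a0) + Rabs (b - b0) + Rabs (c - c0))).
  { assert (INR d1 * (1+B)^d1 * Rabs (a-a0) <= (INR d1 * (1+B)^d1 + INR d2 * (1+B)^d2 + 1) * Rabs (a-a0)).
    { apply Rmult_le_compat_r; [lra|]. assert (0 <= INR d2 * (1+B)^d2) by nra. lra. }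
    assert (INR d2 * (1+B)^d2 * Rabs (b-b0) <= (INR d1 * (1+B)^d1 + INR d2 * (1+B)^d2 + 1) * Rabs (b-b0)).
    { apply Rmult_le_compat_r; [lra|]. assert (0 <= INR d1 * (1+B)^d1) by nra. lra. }
    assert (Rabs (c-c0) <= (INR d1 * (1+B)^d1 + INR d2 * (1+B)^d2 + 1) * Rabs (c-c0)).
    { assert (0 <= INR d1 * (1+B)^d1) by nra. assert (0 <= INR d2 * (1+B)^d2) by nra. nra. }
    lra. }
  rewrite Rmult_assoc. apply Rmult_le_compat_l; lra.
Qed.

Lemma Xf_cont s t : continuity_pt (Xf s) t.
Proof.
  apply continuity_pt_filterlim. unfold Xf.
  apply (continuous_mult (fun t => 2*t) (fun t => / (1 + sqrt (1+4*t*(t-s))))).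
  - apply (continuous_mult (fun _ => 2) (fun t => t)); [apply continuous_const| apply continuous_id].
  - apply continuous_Rinv_comp.
    + apply (continuous_plus (fun _ => 1) (fun t => sqrt (1+4*t*(t-s)))); [apply continuous_const|].
      apply continuous_sqrt_comp.
      apply (continuous_plus (fun _ => 1) (fun t => 4*t*(t-s))); [apply continuous_const|].
      apply (continuous_mult (fun t => 4*t) (fun t => t - s)).
      * apply (continuous_mult (fun _ => 4) (fun t => t)); [apply continuous_const| apply continuous_id].
      * apply (continuous_plus (fun t => t) (fun _ => - s)); [apply continuous_id| apply continuous_const].
    + pose proof (sqrt_pos (1+4*t*(t-s))). lra.
Qed.

Lemma Xf_abs s t : Rabs (Xf s t) <= 2 * Rabs t.
Proof.
  unfold Xf. pose proof (sqrt_pos (1+4*t*(t-s))).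
  unfold Rdiv. rewrite Rabs_mult, Rabs_mult, (Rabs_right 2) by lra.
  rewrite Rabs_inv, (Rabs_right (1 + _)) by lra.
  assert (/ (1 + sqrt (1+4*t*(t-s))) <= 1).
  { apply Rle_trans with (/ 1); [apply Rinv_le_contravar; lra | rewrite Rinv_1; lra]. }
  assert (0 < / (1 + sqrt (1+4*t*(t-s)))) by (apply Rinv_0_lt_compat; lra).
  pose proof (Rabs_pos t). nra.
Qed.

Lemma RInt_close (f g : R -> R) eps : ex_RInt f (-1) 1 -> ex_RInt g (-1) 1 ->
  (forall z, -1 <= z <= 1 -> Rabs (f z - g z) <= eps) ->
  Rabs (RInt f (-1) 1 - RInt g (-1) 1) <= 2*eps.
Proof.
  intros Hf Hg H.
  assert (E : RInt f (-1) 1 - RInt g (-1) 1 = RInt (fun z => f z - g z) (-1) 1).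
  { rewrite (RInt_minus (V:=R_CompleteNormedModule) f g) by assumption. reflexivity. }
  rewrite E. replace (2*eps) with ((1 - -1) * eps) by ring.
  apply abs_RInt_le_const; [lra| |exact H].
  apply (ex_RInt_minus (V:=R_NormedModule) f g); assumption.
Qed.

Lemma phi_cont d1 d2 s1 s2 : continuity (phi d1 d2 s1 s2).
Proof.
  intros t0 eps Heps.
  set (B := 2*(Rabs t0 + 1) + 1).
  assert (HB : 1 <= B) by (unfold B; pose proof (Rabs_pos t0); lra).
  set (M := (1+B)^d1 + (1+B)^d2 + (1+B)).
  set (L := M^2 * (INR d1 * (1+B)^d1 + INR d2 * (1+B)^d2 + 1)).
  assert (HL : 0 < L).
  { unfold L, M. assert (0 <= (1+B)^d1) by (apply pow_le; lra).
    assert (0 <= (1+B)^d2) by (apply pow_le; lra).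
    pose proof (pos_INR d1). pose proof (pos_INR d2).
    apply Rmult_lt_0_compat. apply pow_lt; lra.
    assert (0 <= INR d1 * (1+B)^d1) by nra. assert (0 <= INR d2 * (1+B)^d2) by nra. lra. }
  set (e1 := eps / (12*L)).
  assert (He1 : 0 < e1) by (unfold e1; apply Rdiv_lt_0_compat; lra).
  destruct (Xf_cont s1 t0 e1 He1) as [a1 [Ha1 H1]].
  destruct (Xf_cont s2 t0 e1 He1) as [a2 [Ha2 H2]].
  exists (Rmin (Rmin a1 a2) (Rmin e1 1)).
  split.
  { apply Rmin_pos; apply Rmin_pos; lra. }
  intros t [Dt Ht].
  unfold R_dist in *. simpl in *. unfold R_dist in *.
  assert (Hm1 : Rmin (Rmin a1 a2) (Rmin e1 1) <= a1) by (eapply Rle_trans; apply Rmin_l).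
  assert (Hm2 : Rmin (Rmin a1 a2) (Rmin e1 1) <= a2) by (eapply Rle_trans; [apply Rmin_l| apply Rmin_r]).
  assert (Hm3 : Rmin (Rmin a1 a2) (Rmin e1 1) <= e1) by (eapply Rle_trans; [apply Rmin_r| apply Rmin_l]).
  assert (Hm4 : Rmin (Rmin a1 a2) (Rmin e1 1) <= 1) by (eapply Rle_trans; [apply Rmin_r| apply Rmin_r]).
  assert (X1 : Rabs (Xf s1 t - Xf s1 t0) < e1) by (apply H1; split; [exact Dt| lra]).
  assert (X2 : Rabs (Xf s2 t - Xf s2 t0) < e1) by (apply H2; split; [exact Dt| lra]).
  assert (Ht1 : Rabs t <= Rabs t0 + 1).
  { replace t with ((t - t0) + t0) by ring. eapply Rle_trans; [apply Rabs_triang|]. lra. }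
  assert (Bt : Rabs t <= B) by (unfold B; pose proof (Rabs_pos t0); lra).
  assert (Bt0 : Rabs t0 <= B) by (unfold B; pose proof (Rabs_pos t0); lra).
  assert (Bx1 : Rabs (Xf s1 t) <= B) by (pose proof (Xf_abs s1 t); unfold B; lra).
  assert (Bx2 : Rabs (Xf s2 t) <= B) by (pose proof (Xf_abs s2 t); unfold B; lra).
  assert (Bx10 : Rabs (Xf s1 t0) <= B) by (pose proof (Xf_abs s1 t0); unfold B; pose proof (Rabs_pos t0); lra).
  assert (Bx20 : Rabs (Xf s2 t0) <= B) by (pose proof (Xf_abs s2 t0); unfold B; pose proof (Rabs_pos t0); lra).
  unfold phi.
  eapply Rle_lt_trans.
  apply RInt_close with (eps := L * (3 * e1)); try apply gint_ex.
  - intros z Hz.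
    eapply Rle_trans. apply (gint_lip d1 d2 _ _ _ _ _ _ z B); auto. apply Rabs_le; lra.
    fold M. fold L. apply Rmult_le_compat_l; lra.
  - unfold e1. replace (2 * (L * (3 * (eps / (12 * L))))) with (eps/2) by (field; lra). lra.
Qed.

Lemma phi_small d1 d2 s1 s2 : (1 <= d1)%nat -> (1 <= d2)%nat -> ~ (d1 = 1%nat /\ d2 = 1%nat) ->
  s1 < 1 -> s2 < 1 -> exists t, 0 < t /\ 0 < phi d1 d2 s1 s2 t.
Proof.
  intros Hd1 Hd2 Hd Hs1 Hs2.
  set (K := INR d1 * 2^d1 * 2^d2 + (1 + INR d1) * INR d2 * 2^d2 + INR d1 * INR d2).
  set (M := INR d1 + INR d2 + K).
  set (sg := Rabs s1 + Rabs s2).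
  assert (HK : 0 <= K).
  { unfold K. pose proof (pos_INR d1); pose proof (pos_INR d2).
    assert (0 <= 2^d1) by (apply pow_le; lra). assert (0 <= 2^d2) by (apply pow_le; lra).
    assert (0 <= INR d1 * 2^d1) by nra. assert (0 <= INR d2 * 2^d2) by nra.
    assert (0 <= INR d1 * 2^d1 * 2^d2) by nra.
    assert (0 <= (1 + INR d1) * INR d2 * 2^d2) by nra. nra. }
  assert (Hd12 : 3 <= INR d1 + INR d2).
  { rewrite <- plus_INR. replace 3 with (INR 3) by (simpl; ring). apply le_INR. lia. }
  assert (HM : 0 <= M) by (unfold M; pose proof (pos_INR d1); pose proof (pos_INR d2); lra).
  assert (Hsg : 0 <= sg) by (unfold sg; pose proof (Rabs_pos s1); pose proof (Rabs_pos s2); lra).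
  set (Q := 2 + 2*sg + 8*K + 3*M).
  assert (HQ : 2 <= Q) by (unfold Q; lra).
  set (t := 1/(3*Q+8)).
  assert (Ht : t*(3*Q+8) = 1) by (unfold t; field; lra).
  assert (Ht0 : 0 < t) by (unfold t; apply Rdiv_lt_0_compat; lra).
  assert (HtQ : t*Q <= 1/3) by nra.
  assert (Ht8 : t <= 1/8) by nra.
  exists t. split; [exact Ht0|].
  destruct (Xf_props s1 t Hs1 Ht0) as [[P1 _] [_ U1]].
  destruct (Xf_props s2 t Hs2 Ht0) as [[P2 _] [_ U2]].
  pose proof (Xf_lower s1 t Hs1 Ht0) as L1.
  pose proof (Xf_lower s2 t Hs2 Ht0) as L2.
  set (x1 := Xf s1 t) in *. set (x2 := Xf s2 t) in *.
  set (e := t^2 + sg*t).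
  assert (He1 : t*(1-e) <= x1).
  { eapply Rle_trans; [|exact L1]. apply Rmult_le_compat_l; [lra|].
    unfold e, sg. pose proof (Rabs_pos s2). nra. }
  assert (He2 : t*(1-e) <= x2).
  { eapply Rle_trans; [|exact L2]. apply Rmult_le_compat_l; [lra|].
    unfold e, sg. pose proof (Rabs_pos s1). nra. }
  assert (Hm : 0 <= t*(1-e)).
  { apply Rmult_le_pos; [lra|]. unfold e.
    assert (t^2 <= t) by nra. assert (sg*t <= Q*t) by (apply Rmult_le_compat_r; unfold Q; lra). nra. }
  pose proof (phi_bound_pos d1 d2 x1 x2 t (2*t) ltac:(lra) ltac:(lra) ltac:(lra) Ht0) as HB.
  simpl in HB. fold K in HB. fold M in HB.
  unfold phi. fold x1 x2.
  eapply Rlt_le_trans; [|exact HB].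
  set (m := t*(1-e)) in *.
  assert (Hc : 3*m <= INR d1 * x1 + INR d2 * x2).
  { pose proof (pos_INR d1); pose proof (pos_INR d2).
    assert (INR d1 * m <= INR d1 * x1) by (apply Rmult_le_compat_l; lra).
    assert (INR d2 * m <= INR d2 * x2) by (apply Rmult_le_compat_l; lra).
    assert (3*m <= (INR d1 + INR d2)*m) by (apply Rmult_le_compat_r; lra). lra. }
  assert (Hmv : m = t - t^3 - sg*t^2) by (unfold m, e; ring).
  assert (Ht3 : t^3 <= t^2) by (simpl; nra).
  assert (Hlow : 2*t/3 - t*(t*Q) <=
     2 * (INR d1 * x1 + INR d2 * x2) / 3 - 2 * K * (2*t)^2 - 4/3 * t * (1 + M * (2*t))).
  { assert (t*(t*Q) = 2*t^2 + 2*sg*t^2 + 8*K*t^2 + 3*M*t^2) by (unfold Q; simpl; ring).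
    assert (0 <= M*t^2) by (apply Rmult_le_pos; [lra| apply pow2_ge_0]).
    simpl in *. nra. }
  eapply Rlt_le_trans; [|exact Hlow].
  assert (t*(t*Q) <= t*(1/3)) by (apply Rmult_le_compat_l; lra).
  lra.
Qed.

Theorem lemma3p6 (d1 d2 : nat) (s1 s2 : R) :
  (1 <= d1)%nat -> (1 <= d2)%nat -> ~ (d1 = 1%nat /\ d2 = 1%nat) ->
  s1 < 1 -> s2 < 1 ->
  exists x1 x2 : R, 0 < x1 < 1 /\ 0 < x2 < 1 /\
    h1 d1 d2 s1 x1 x2 = 0 /\ h2 d1 d2 s2 x1 x2 = 0.
Proof.
  intros Hd1 Hd2 Hd Hs1 Hs2.
  destruct (phi_small d1 d2 s1 s2 Hd1 Hd2 Hd Hs1 Hs2) as [ta [Hta Hpa]].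
  set (tb := 2^d1*2^d2).
  assert (Htb : 0 < tb) by (unfold tb; apply Rmult_lt_0_compat; apply pow_lt; lra).
  assert (Hpb : phi d1 d2 s1 s2 tb < 0).
  { destruct (Xf_props s1 tb Hs1 Htb) as [P1 _].
    destruct (Xf_props s2 tb Hs2 Htb) as [P2 _].
    apply phi_bound_neg; auto. unfold tb; lra. }
  destruct (IVT_gen (phi d1 d2 s1 s2) ta tb 0 (phi_cont d1 d2 s1 s2)) as [t0 [Hint Ht0]].
  { unfold Rmin, Rmax. destruct (Rle_dec _ _); lra. }
  assert (Hpos : 0 < t0).
  { unfold Rmin in Hint. destruct (Rle_dec ta tb); lra. }
  exists (Xf s1 t0), (Xf s2 t0).
  destruct (Xf_props s1 t0 Hs1 Hpos) as [P1 _].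
  destruct (Xf_props s2 t0 Hs2 Hpos) as [P2 _].
  destruct (h_from_phi d1 d2 s1 s2 t0 Hs1 Hs2 Hpos Ht0).
  auto.
Qed.
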